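(* Suppose that $\theta(n)=O(n^{\alpha})$ for some $\alpha\in(0,1]$. Then $\theta'(m)=O(m^{\beta})$, where $\beta=\frac{\alpha}{1+\alpha}$.
   Context: An interval colouring of a graph $G$ is a proper edge-colouring $c\colon E(G)\to\mathbb{N}$ such that for every vertex $v$ the set of colours on edges incident to $v$ is a set of consecutive integers. The interval colouring thickness $\theta(G)$ is the minimum number of interval colourable subgraphs into which $E(G)$ can be edge-decomposed. $\theta(n)$ is the maximum of $\theta(G)$ over graphs $G$ on $n$ vertices and $\theta'(m)$ the maximum of $\theta(G)$ over graphs with $m$ edges. *)

(* Defs.v *)
From Stdlib Require Import Reals ClassicalDescription ClassicalEpsilon.
From mathcomp Require Import all_boot.
Set Implicit Arguments. Unset Strict Implicit. Unset Printing Implicit Defensive.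

Definition simple_graph n (E : {set {set 'I_n}}) : Prop :=
  forall e, e \in E -> #|e| = 2.

Definition interval_colouring n (F : {set {set 'I_n}}) (c : {set 'I_n} -> nat) : Prop :=
  (forall e f, e \in F -> f \in F -> e != f -> ~~ [disjoint e & f] -> c e <> c f) /\
  (forall (v : 'I_n) (a b k : nat),
      (exists2 e, e \in F & (v \in e) && (c e == a)) ->
      (exists2 e, e \in F & (v \in e) && (c e == b)) ->
      a <= k -> k <= b ->
      exists2 e, e \in F & (v \in e) && (c e == k)).

Definition interval_colourable n (F : {set {set 'I_n}}) : Prop :=
  exists c, interval_colouring F c.

Definition decomposable n (E : {set {set 'I_n}}) (k : nat) : Prop :=
  exists p : {set 'I_n} -> nat,
    (forall e, e \in E -> p e < k) /\
    (forall i, i < k -> interval_colourable [set e in E | p e == i]).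

Definition pbool (P : Prop) : bool := if excluded_middle_informative P then true else false.

(* theta(G) = minimum number of interval colourable subgraphs into which E(G)
   edge-decomposes (the default 0 in the impossible case of no such k). *)
Definition thickness n (E : {set {set 'I_n}}) : nat :=
  match excluded_middle_informative (exists k, pbool (decomposable E k)) with
  | left h => ex_minn h
  | right _ => 0
  end.

Definition theta_n (n : nat) : nat :=
  \max_(E : {set {set 'I_n}} | pbool (simple_graph E)) thickness E.

(* theta'(m) = max of theta(G) over graphs G with m edges (any number of vertices).
   The value set is nonempty and bounded; the fallback 0 is only for definiteness. *)
Definition thetap_val (m k : nat) : Prop :=
  exists n (E : {set {set 'I_n}}), simple_graph E /\ #|E| = m /\ thickness E = k.

Definition theta_m (m : nat) : nat :=
  match excluded_middle_informative
          ((exists k, pbool (thetap_val m k)) /\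
           exists B, forall k, pbool (thetap_val m k) -> k <= B) with
  | left (conj h1 h2) =>
      let (B, hB) := constructive_indefinite_description _ h2 in ex_maxn h1 hB
  | right _ => 0
  end.

(* Main.v *)
Require Import Defs.
From Stdlib Require Import Reals.
From Stdlib Require Import Lra Lia ClassicalDescription ClassicalEpsilon.
From mathcomp Require Import all_boot.
Set Implicit Arguments. Unset Strict Implicit. Unset Printing Implicit Defensive.


Lemma pboolP (P : Prop) : pbool P <-> P.
Proof. rewrite /pbool; case: excluded_middle_informative => //. Qed.

Lemma free_colour (s : seq nat) K : size s < K -> exists j, j < K /\ j \notin s.
Proof.
move=> hs; apply: NNPP => hn.
have sub : {subset iota 0 K <= s}.
  move=> j; rewrite mem_iota add0n => /= hj; apply: NNPP => /negP hj'.
  by apply: hn; exists j.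
have := uniq_leq_size (iota_uniq 0 K) sub; rewrite size_iota => h.
by move: (leq_trans hs h); rewrite ltnn.
Qed.

Lemma greedy (T : finType) (conf : T -> T -> bool) K (S : {set T}) :
  (forall x y, conf x y -> conf y x) ->
  (forall x, x \in S -> #|[set y in S | conf x y]| < K) ->
  exists c : T -> nat, (forall x, x \in S -> c x < K) /\
    (forall x y, x \in S -> y \in S -> x != y -> conf x y -> c x != c y).
Proof.
move=> csym; move: {2}#|S| (erefl #|S|) => n; elim: n S => [|n IH] S hS hK.
  exists (fun _ => 0); split => [x xS|x y xS]; last by move: (card0_eq hS x); rewrite xS.
  by move: (card0_eq hS x); rewrite xS.
have [x xS] : exists x, x \in S.
  by apply/set0Pn; apply/eqP => h; rewrite h cards0 in hS.
have hS' : #|S :\ x| = n by move: (cardsD1 x S); rewrite xS hS add1n => -[].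
have [|c' [c'K c'p]] := IH (S :\ x) hS'.
  move=> y; rewrite in_setD1 => /andP[_ yS]; apply: leq_ltn_trans (hK y yS).
  by apply: subset_leq_card; apply/subsetP => z; rewrite !inE => /andP[/andP[_ ->] ->].
set U := [seq c' y | y <- enum [set y in S :\ x | conf x y]].
have [j [jK jU]] : exists j, j < K /\ j \notin U.
  apply: free_colour; rewrite size_map -cardE; apply: leq_ltn_trans (hK x xS).
  by apply: subset_leq_card; apply/subsetP => z; rewrite !inE => /andP[/andP[_ ->] ->].
exists (fun y => if y == x then j else c' y); split.
  by move=> y yS; case: eqP => // /eqP yx; apply: c'K; rewrite in_setD1 yx.
have key : forall y, y \in S -> y != x -> conf x y -> c' y != j.
  move=> y yS yx cxy; apply/eqP => e; move: jU; rewrite -e; apply/negP/negPn.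
  by apply: map_f; rewrite mem_enum !inE yx yS cxy.
move=> y z yS zS yz cyz.
case: (eqVneq y x) => [ey|nyx]; case: (eqVneq z x) => [ez|nzx].
- by move: yz; rewrite ey ez eqxx.
- by rewrite eq_sym; apply: key => //; rewrite -ey.
- by apply: key => //; rewrite -ez; apply: csym.
- by apply: c'p; rewrite ?in_setD1 ?nyx ?nzx.
Qed.

Lemma decomp_card n (E : {set {set 'I_n}}) : decomposable E #|E|.
Proof.
exists (fun e => index e (enum E)); split.
  by move=> e eE; rewrite cardE index_mem mem_enum.
move=> i _; exists (fun _ => 0); split.
  move=> e f; rewrite !inE => /andP[eE /eqP ei] /andP[fE /eqP fi] ef _.
  move: ef; rewrite -(nth_index e (x:=e) (s:=enum E)) ?mem_enum //.
  by rewrite -(nth_index e (x:=f) (s:=enum E)) ?mem_enum // ei fi eqxx.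
move=> v a b k [e eF /andP[ve /eqP <-]] [f _ /andP[vf /eqP <-]] h1 h2.
move: h2; rewrite leqn0 => /eqP ->; exists e => //; by rewrite ve.
Qed.

Lemma thickness_spec n (E : {set {set 'I_n}}) :
  decomposable E (thickness E) /\ forall k, decomposable E k -> thickness E <= k.
Proof.
rewrite /thickness; case: excluded_middle_informative => [h|h]; last first.
  by exfalso; apply: h; exists #|E|; apply/pboolP; apply: decomp_card.
case: ex_minnP => k /pboolP dk hk; split => // j dj; apply: hk; exact/pboolP.
Qed.

Lemma decomp_union n (E A : {set {set 'I_n}}) k1 k2 :
  A \subset E -> decomposable A k1 -> decomposable (E :\: A) k2 ->
  decomposable E (k1 + k2).
Proof.
move=> AE [p1 [p1k p1c]] [p2 [p2k p2c]].
exists (fun e => if e \in A then p1 e else k1 + p2 e); split.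
  move=> e eE; case: ifP => eA; first by apply: ltn_addr; apply: p1k.
  by rewrite ltn_add2l; apply: p2k; rewrite inE eA.
move=> i ik; case: (ltnP i k1) => ik1.
  have -> : [set e in E | (if e \in A then p1 e else k1 + p2 e) == i] =
            [set e in A | p1 e == i].
    apply/setP => e; rewrite !inE; case: ifP => eA.
      by rewrite (subsetP AE _ eA).
    apply/negbTE/negP => /andP[_ /eqP ei].
    by move: ik1; rewrite -ei ltnNge leq_addr.
  exact: p1c.
have -> : [set e in E | (if e \in A then p1 e else k1 + p2 e) == i] =
          [set e in E :\: A | p2 e == i - k1].
  apply/setP => e; rewrite !inE; case: ifP => eA /=.
    apply/negbTE; apply/negP => /andP[_ /eqP ei].
    by move: (p1k e eA); rewrite ei ltnNge ik1.
  by congr (_ && _); apply/eqP/eqP => [<-|->]; [rewrite addKn | rewrite subnKC].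
by apply: p2c; rewrite ltn_subLR.
Qed.

Lemma star_colourable n (F : {set {set 'I_n}}) (z : {set 'I_n} -> option 'I_n) :
  (forall e w, e \in F -> z e = Some w -> w \in e) ->
  (forall e f w, e \in F -> f \in F -> e != f -> w \in e -> w \in f -> z e = Some w) ->
  interval_colourable F.
Proof.
move=> zin zsh.
pose Sz o := [set f in F | z f == o].
exists (fun e => index e (enum (Sz (z e)))); split.
  move=> e f eF fF ef; rewrite -setI_eq0 => /set0Pn [w]; rewrite inE => /andP[we wf].
  have ze := zsh e f w eF fF ef we wf.
  have zf : z f = Some w by apply: (zsh f e w) => //; rewrite eq_sym.
  rewrite ze zf => ei.
  suff : e = f by move/eqP: ef.
  have eS : e \in enum (Sz (Some w)) by rewrite mem_enum /Sz inE eF ze eqxx.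
  have fS : f \in enum (Sz (Some w)) by rewrite mem_enum /Sz inE fF zf eqxx.
  by rewrite -[LHS](nth_index e eS) -[RHS](nth_index e fS) ei.
move=> v a b k [e eF /andP[ve /eqP ea]] [f fF /andP[vf /eqP fb]] ak kb.
case: (eqVneq e f) => [ef|ef].
  exists e => //; rewrite ve /=; subst f; move: fb; rewrite ea => ab; subst b.
  by apply/eqP/anti_leq; rewrite ak kb.
have zf : z f = Some v by apply: (zsh f e v) => //; rewrite eq_sym.
have fS : f \in enum (Sz (Some v)) by rewrite mem_enum /Sz inE fF zf eqxx.
have kS : k < size (enum (Sz (Some v))).
  by apply: leq_ltn_trans kb _; rewrite -fb zf index_mem.
set g := nth f (enum (Sz (Some v))) k.
have gS : g \in enum (Sz (Some v)) by apply: mem_nth.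
move: (gS); rewrite mem_enum /Sz inE => /andP[gF /eqP zg].
exists g => //; rewrite (zin g v gF zg) /= zg /g index_uniq //; exact: enum_uniq.
Qed.

Lemma pullback n m (E : {set {set 'I_n}}) (H : {set 'I_n}) (g : 'I_n -> 'I_m) k :
  (forall e, e \in E -> e \subset H) -> {in H &, injective g} ->
  decomposable ((fun e : {set 'I_n} => g @: e) @: E) k -> decomposable E k.
Proof.
move=> EH ginj [p' [p'k p'c]].
have Ginj : forall e f, e \in E -> f \in E -> g @: e = g @: f -> e = f.
  have half : forall e f, e \in E -> f \in E -> g @: e = g @: f -> e \subset f.
    move=> e f eE fE ef; apply/subsetP => x xe.
    have : g x \in g @: f by rewrite -ef; apply: imset_f.
    case/imsetP => y yf gxy.
    have -> : x = y by apply: ginj => //; [apply: (subsetP (EH _ eE)) | apply: (subsetP (EH _ fE))].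
    done.
  move=> e f eE fE ef; apply/eqP; rewrite eqEsubset.
  by rewrite (half e f) // (half f e).
exists (fun e : {set 'I_n} => p' (g @: e)); split.
  by move=> e eE; apply: p'k; apply: imset_f.
move=> i ik; have [c' [c'p c'i]] := p'c i ik.
exists (fun e : {set 'I_n} => c' (g @: e)); split.
  move=> e f; rewrite !inE => /andP[eE ei] /andP[fE fi] ef.
  rewrite -setI_eq0 => /set0Pn [w]; rewrite inE => /andP[we wf].
  apply: c'p.
  - by rewrite inE imset_f.
  - by rewrite inE imset_f.
  - by apply/negP => /eqP h; move/negP: ef; apply; rewrite (Ginj e f).
  - by rewrite -setI_eq0; apply/set0Pn; exists (g w); rewrite inE !imset_f.
move=> v a b k' [e eF /andP[ve ea]] [f fF /andP[vf fb]] ak kb.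
move: (eF) (fF); rewrite !inE => /andP[eE ei] /andP[fE fi].
have vH : v \in H by apply: (subsetP (EH _ eE)).
set F' := [set e0 in (fun e : {set 'I_n} => g @: e) @: E | p' e0 == i].
have ha : exists2 e0, e0 \in F' & (g v \in e0) && (c' e0 == a).
  by exists (g @: e); [rewrite /F' inE imset_f | rewrite imset_f].
have hb : exists2 e0, e0 \in F' & (g v \in e0) && (c' e0 == b).
  by exists (g @: f); [rewrite /F' inE imset_f | rewrite imset_f].
have [e' e'F /andP[ve' ek]] := c'i (g v) a b k' ha hb ak kb.
move: e'F; rewrite /F' inE => /andP[/imsetP [e0 e0E ee] e0i]; subst e'.
exists e0; first by rewrite inE e0E.
rewrite ek andbT.
case/imsetP: ve' => y ye0 gvy.
by rewrite (ginj v y) // (subsetP (EH _ e0E)).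
Qed.

Lemma relabel n (E : {set {set 'I_n}}) (H : {set 'I_n}) K :
  simple_graph E -> (forall e, e \in E -> e \subset H) -> #|H| <= K.+1 ->
  thickness E <= theta_n K.+1.
Proof.
move=> sE EH HK.
pose g (v : 'I_n) : 'I_K.+1 := inord (index v (enum H)).
have ginj : {in H &, injective g}.
  move=> u v uH vH; rewrite /g => /(congr1 (@nat_of_ord _)).
  rewrite !inordK; last first.
  - by apply: leq_trans HK; rewrite cardE index_mem mem_enum.
  - by apply: leq_trans HK; rewrite cardE index_mem mem_enum.
  move=> h; rewrite -[u](nth_index u (s := enum H)) ?mem_enum // h.
  by rewrite nth_index // mem_enum.
set E' := (fun e : {set 'I_n} => g @: e) @: E.
have sE' : simple_graph E'.
  move=> e' /imsetP [e eE ->]; rewrite card_in_imset; first exact: sE.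
  by move=> x y xe ye; apply: ginj; apply: (subsetP (EH _ eE)).
have [dE' _] := thickness_spec E'.
have [_ mE] := thickness_spec E.
apply: leq_trans (mE _ (pullback EH ginj dE')) _.
rewrite /theta_n; apply: (@leq_bigmax_cond _ (fun E0 : {set {set 'I_K.+1}} => pbool (simple_graph E0)) (fun E0 => thickness E0) E').
exact/pboolP.
Qed.

Definition deg n (E : {set {set 'I_n}}) (v : 'I_n) := #|[set e in E | v \in e]|.
Definition highs n (E : {set {set 'I_n}}) t := [set v | t <= deg E v].

Lemma pair_mem n (e : {set 'I_n}) w u v :
  #|e| = 2 -> w \in e -> u \in e -> w != u -> v \in e -> v = w \/ v = u.
Proof.
move=> c2 we ue wu ve.
have : [set w; u] == e.
  rewrite eqEcard c2 cards2 wu andbT; apply/subsetP => x.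
  by rewrite !inE => /orP[] /eqP ->.
move/eqP => h; move: ve; rewrite -h !inE => /orP[] /eqP; auto.
Qed.

Lemma low_part n (E : {set {set 'I_n}}) t : simple_graph E -> 0 < t ->
  decomposable (E :\: [set e in E | e \subset highs E t]) (2 * t).
Proof.
move=> sE t0.
set L := E :\: _.
pose conf (e f : {set 'I_n}) := [exists v, [&& v \in e, v \in f & deg E v < t]].
have csym : forall e f, conf e f -> conf f e.
  move=> e f /existsP [v /and3P[ve vf dv]]; apply/existsP; exists v; by rewrite ve vf dv.
pose D v := if deg E v < t then [set f in E | v \in f] else set0.
have Dc : forall v, #|D v| <= t.-1.
  move=> v; rewrite /D; case: ifP => h; last by rewrite cards0.
  by rewrite -ltnS prednK.
have hK : forall e, e \in L -> #|[set f in L | conf e f]| < 2 * t.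
  move=> e; rewrite !inE => /andP[_ eE].
  have [x [y [xy exy]]] := cards2P _ (introT eqP (sE e eE)).
  have sub : [set f in L | conf e f] \subset D x :|: D y.
    apply/subsetP => f; rewrite !inE => /andP[/andP[_ fE] /existsP [v /and3P[ve vf dv]]].
    move: ve; rewrite exy !inE => /orP[] /eqP <-; rewrite /D dv inE fE vf //.
    by rewrite orbT.
  apply: leq_ltn_trans (subset_leq_card sub) _.
  apply: leq_ltn_trans (leq_card_setU _ _) _.
  apply: leq_ltn_trans (leq_add (Dc x) (Dc y)) _.
  by rewrite mul2n -addnn -(prednK t0) addSn ltnS addnS leqnSn.
have [col [colK colp]] := greedy csym hK.
exists col; split; first exact: colK.
move=> i _.
apply: (@star_colourable _ _ (fun e => [pick v in e | t <= deg E v])).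
  by move=> e w _; case: pickP => // v /andP[ve _] [<-].
move=> e f w; rewrite !inE => /andP[/andP[eH eE] ei] /andP[/andP[fH fE] fi] ef we wf.
have hw : t <= deg E w.
  rewrite leqNgt; apply/negP => dw.
  have : col e != col f by apply: colp; rewrite ?inE ?eH ?fH ?eE ?fE //;
    apply/existsP; exists w; rewrite we wf dw.
  by rewrite (eqP ei) (eqP fi) eqxx.
move: eH; rewrite eE /= => /subsetPn [u ue]; rewrite inE -ltnNge => du.
have wu : w != u by apply/eqP => wu; move: hw; rewrite wu leqNgt du.
case: pickP => [v /andP[ve hv]|none]; last by move: (none w); rewrite we hw.
case: (pair_mem (sE e eE) we ue wu ve) => [-> //|vu].
by move: hv; rewrite vu leqNgt du.
Qed.

Lemma card_sum (T : finType) (A : {pred T}) : #|A| = \sum_(x : T) (x \in A : nat).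
Proof. by rewrite -sum1_card big_mkcond /=; apply: eq_bigr => x _; case: (x \in A). Qed.

Lemma handshake n (E : {set {set 'I_n}}) t : simple_graph E ->
  t * #|highs E t| <= 2 * #|E|.
Proof.
move=> sE.
have h1 : \sum_(v : 'I_n) deg E v = \sum_(e in E) #|e|.
  rewrite /deg.
  transitivity (\sum_(v : 'I_n) \sum_(e in E) (v \in e : nat)).
    apply: eq_bigr => v _; rewrite card_sum [RHS]big_mkcond /=.
    by apply: eq_bigr => e _; rewrite inE; case: (e \in E).
  rewrite exchange_big /=; apply: eq_bigr => e _; by rewrite card_sum.
have h2 : \sum_(e in E) #|e| = 2 * #|E|.
  rewrite -sum1_card big_distrr /=; apply: eq_bigr => e eE; by rewrite sE // muln1.
rewrite -h2 -h1 mulnC -sum_nat_const.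
apply: leq_trans (_ : \sum_(v in highs E t) deg E v <= _).
  by apply: leq_sum => v; rewrite inE.
by rewrite [X in _ <= X](bigID (fun v => v \in highs E t)) /= leq_addr.
Qed.

Lemma comb n (E : {set {set 'I_n}}) t N : simple_graph E -> 0 < t ->
  exists h, t * h <= 2 * #|E| /\ thickness E <= theta_n (maxn h N).+1 + 2 * t.
Proof.
move=> sE t0; exists #|highs E t|; split; first exact: handshake.
set EH := [set e in E | e \subset highs E t].
have sEH : simple_graph EH by move=> e; rewrite inE => /andP[eE _]; apply: sE.
have EHs : forall e, e \in EH -> e \subset highs E t by move=> e; rewrite inE => /andP[_ ->].
have rl := @relabel n EH (highs E t) (maxn #|highs E t| N) sEH
  EHs (leq_trans (leq_maxl _ _) (leqnSn _)).
have [dEH _] := thickness_spec EH.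
have dE := decomp_union (_ : EH \subset E) dEH (low_part sE t0).
have [_ mE] := thickness_spec E.
apply: leq_trans (mE _ (dE _)) _; first by apply/subsetP => e; rewrite inE => /andP[].
by rewrite leq_add2r.
Qed.

Lemma theta_m_ind m (P : nat -> Prop) :
  (forall k, thetap_val m k -> P k) -> P 0 -> P (theta_m m).
Proof.
move=> hP h0; rewrite /theta_m; case: excluded_middle_informative => [[h1 h2]|] //.
case: constructive_indefinite_description => B hB.
case: ex_maxnP => k /pboolP hk _; exact: hP.
Qed.
Section Final.
Local Open Scope R_scope.

Lemma Rpower_pos x y : (0 < Rpower x y).
Proof. rewrite /Rpower; apply: exp_pos. Qed.

Lemma INR_leq (a b : nat) : (a <= b)%N -> INR a <= INR b.
Proof. by move/leP; apply: le_INR. Qed.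

End Final.

Theorem lemma7 (alpha : R) :
  Rlt 0 alpha -> Rle alpha 1 ->
  (exists (C : R) (N : nat), forall n : nat, (N <= n)%N ->
      Rle (INR (theta_n n)) (Rmult C (Rpower (INR n) alpha))) ->
  (exists (C : R) (M : nat), forall m : nat, (M <= m)%N ->
      Rle (INR (theta_m m))
          (Rmult C (Rpower (INR m) (Rdiv alpha (Rplus 1 alpha))))).
Proof.
Local Open Scope R_scope.
move=> a0 a1 [C [N hC]].
set b := Rdiv alpha (Rplus 1 alpha).
have b0 : (0 <= b) by rewrite /b; apply: Rle_mult_inv_pos; lra.
have b1 : (b <= 1).
  rewrite /b /Rdiv; apply: (Rmult_le_reg_r (1 + alpha)); first lra.
  rewrite Rmult_assoc Rinv_l; lra.
have ab : ((1 - b) * alpha = b) by rewrite /b; field; lra.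
set A := Rpower (INR N + 3) alpha.
have A0 : (0 < A) by apply: Rpower_pos.
exists (Rabs C * A + 4), 1%N => m m1.
have x1 : (1 <= INR m) by have := INR_leq m1; rewrite /=.
set x := INR m in x1 *.
set X := Rpower x b; set Y := Rpower x (1 - b).
have XY : (X * Y = x).
  by rewrite /X /Y -Rpower_plus (_ : (b + (1 - b) = 1)) ?Rpower_1; lra.
have X1 : (1 <= X).
  by rewrite -(Rpower_O x) /X; [apply: Rle_Rpower | lra].
have Y1 : (1 <= Y).
  by rewrite -(Rpower_O x) /Y; [apply: Rle_Rpower; lra | lra].
have Ca : (0 <= Rabs C * A) by apply: Rmult_le_pos; [apply: Rabs_pos | lra].
apply: (@theta_m_ind m (fun k => INR k <= (Rabs C * A + 4) * X)); last first.
  by rewrite /=; nra.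
move=> k [n [E [sE [cE tk]]]].
have [t [tX tX1]] : exists t : nat, (X <= INR t <= X + 1).
  exists (Z.to_nat (up X)); have [u1 u2] := archimed X.
  have up0 : (0 <= up X)%Z by apply: le_IZR; lra.
  rewrite INR_IZR_INZ Znat.Z2Nat.id //; lra.
have t0 : (0 < t)%N by apply/ltP; apply: INR_lt; rewrite /=; lra.
have [h [th hk]] := comb N sE t0.
set K := (maxn h N).+1.
have hb : (INR h <= 2 * Y).
  have := INR_leq th; rewrite !mult_INR cE /= -/x => th'.
  apply: (Rmult_le_reg_l X); first lra.
  have : 0 <= INR h by apply: pos_INR. nra.
have KN : (INR K <= (INR N + 3) * Y).
  have : (K <= h + N + 1)%N by rewrite /K addn1 ltnS geq_max leq_addr leq_addl.
  move/INR_leq; rewrite !plus_INR => h'.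
  have i1 : INR 1 = 1 by [].
  have n0 := pos_INR N.
  nra.
have K0 : (0 < INR K) by apply: lt_0_INR; apply/ltP.
have hK := hC K (leq_trans (leq_maxr h N) (leqnSn _)).
have pK : (Rpower (INR K) alpha <= A * X).
  apply: (Rle_trans _ _ _ (Rle_Rpower_l _ _ alpha (Rlt_le _ _ a0) (conj K0 KN))).
  rewrite -Rpower_mult_distr; [|have := pos_INR N; lra|lra].
  by rewrite /Y Rpower_mult ab; apply: Rle_refl.
have := INR_leq hk; rewrite -tk plus_INR mult_INR /= => hk'.
have CC : (C * Rpower (INR K) alpha <= Rabs C * (A * X)).
  apply: Rle_trans (Rle_abs _) _; rewrite Rabs_mult (Rabs_right (Rpower _ _)).
    by apply: Rmult_le_compat_l; [apply: Rabs_pos | lra].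
  by apply: Rle_ge; apply: Rlt_le; apply: Rpower_pos.
change (theta_n (maxn h N).+1) with (theta_n K) in hk'. nra.
Qed.
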